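(* Suppose Assumption A holds with $\beta,\gamma\in(0,\infty)$. Fix $\mu>0$ and $\sigma\in\mathcal X$, let $\pi^{\mu,\sigma}$ be a perturbed equilibrium, and let $0<\eta\le\frac{2\mu\gamma\rho^2}{\mu^2\gamma\rho^2(\gamma+2\beta)+8L^2}$. Let $(\pi^t)_{t\ge0}$ be any sequence in $\mathcal X$ such that for all $t\ge0$, $$D_\psi(\pi^{\mu,\sigma},\pi^{t+1})-D_\psi(\pi^{\mu,\sigma},\pi^t)+D_\psi(\pi^{t+1},\pi^t)\le\eta\sum_{i=1}^N\langle\nabla_{\pi_i}v_i(\pi^t)-\mu\nabla_{\pi_i}G(\pi_i^t,\sigma_i),\pi_i^{t+1}-\pi_i^{\mu,\sigma}\rangle.$$ Then for all $t\ge0$, $$D_\psi(\pi^{\mu,\sigma},\pi^t)\le D_\psi(\pi^{\mu,\sigma},\pi^0)\Big(1-\frac{\eta\mu\gamma}2\Big)^t.$$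
   Context: Game. Let $N\ge1$. For each $i\in[N]$, $\mathcal X_i\subseteq\mathbb R^{d_i}$ is a nonempty compact convex set, and $\mathcal X=\prod_i\mathcal X_i$. Each $v_i:\mathcal X\to\mathbb R$ is differentiable, with block gradient $\nabla_{\pi_i}v_i$. The norm is Euclidean, with $\|\pi\|^2=\sum_i\|\pi_i\|^2$. The game is monotone: $\sum_i\langle\nabla_{\pi_i}v_i(\pi)-\nabla_{\pi_i}v_i(\pi'),\pi_i-\pi_i'\rangle\le0$. The game is $L$-smooth: $\sum_i\|\nabla_{\pi_i}v_i(\pi)-\nabla_{\pi_i}v_i(\pi')\|^2\le L^2\|\pi-\pi'\|^2$. Regularizer. $\psi:\mathcal X_i\to\mathbb R$ is differentiable and $\rho$-strongly convex with respect to $\|\cdot\|$. Bregman divergence: $D_\psi(x,y)=\psi(x)-\psi(y)-\langle\nabla\psi(y),x-y\rangle$, and $D_\psi(\pi,\pi')=\sum_iD_\psi(\pi_i,\pi_i')$. Perturbation. $G:\mathcal X_i\times\mathcal X_i\to[0,\infty)$ is differentiable in its first argument, with gradient $\nabla_{\pi_i}G$ in that argument. $G(\cdot,\sigma_i)$ is strictly convex with minimum $0$ at $\sigma_i$. For $\mu>0$ and $\sigma\in\mathcal X$, $\pi^{\mu,\sigma}$ is a profile with $\pi_i^{\mu,\sigma}\in\arg\max_{\pi_i}\{v_i(\pi_i,\pi^{\mu,\sigma}_{-i})-\mu G(\pi_i,\sigma_i)\}$ for all $i$. Assumption A: for all $\sigma_i,\pi_i,\pi_i'\in\mathcal X_i$,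 $$\gamma D_\psi(\pi_i',\pi_i)\le G(\pi_i',\sigma_i)-G(\pi_i,\sigma_i)-\langle\nabla_{\pi_i}G(\pi_i,\sigma_i),\pi_i'-\pi_i\rangle\le\beta D_\psi(\pi_i',\pi_i).$$ *)

(* Defs.v *)
From HB Require Import structures.
From mathcomp Require Import all_boot all_order all_algebra.
From mathcomp Require Import all_classical all_reals all_analysis.
Set Implicit Arguments. Unset Strict Implicit. Unset Printing Implicit Defensive.
Import Order.TTheory GRing.Theory Num.Theory.
Import numFieldNormedType.Exports.
Local Open Scope classical_set_scope.
Local Open Scope ring_scope.

Section Defs.
Variable R : realType.

Definition dotv n (u v : 'rV[R]_n) : R := \sum_(j < n) u ord0 j * v ord0 j.
Definition sqnorm n (u : 'rV[R]_n) : R := dotv u u.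
Definition enorm n (u : 'rV[R]_n) : R := Num.sqrt (sqnorm u).

Definition convex_set_rv n (A : set 'rV[R]_n) : Prop :=
  forall x y t, A x -> A y -> 0 <= t <= 1 -> A (t *: x + (1 - t) *: y).

Definition is_grad_on n (A : set 'rV[R]_n) (f : 'rV[R]_n -> R)
  (g : 'rV[R]_n -> 'rV[R]_n) : Prop :=
  forall x, A x -> forall e : R, 0 < e -> exists2 del : R, 0 < del &
    forall y, A y -> enorm (y - x) < del ->
      `| f y - f x - dotv (g x) (y - x) | <= e * enorm (y - x).

Definition strongly_convex_on n (rho : R) (A : set 'rV[R]_n) (f : 'rV[R]_n -> R) : Prop :=
  forall x y t, A x -> A y -> 0 <= t <= 1 ->
    f (t *: x + (1 - t) *: y) <=
      t * f x + (1 - t) * f y - rho / 2 * t * (1 - t) * sqnorm (x - y).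

Definition strictly_convex_on n (A : set 'rV[R]_n) (f : 'rV[R]_n -> R) : Prop :=
  forall x y t, A x -> A y -> x != y -> 0 < t < 1 ->
    f (t *: x + (1 - t) *: y) < t * f x + (1 - t) * f y.

Definition bregman n (psi : 'rV[R]_n -> R) (gpsi : 'rV[R]_n -> 'rV[R]_n)
  (x y : 'rV[R]_n) : R := psi x - psi y - dotv (gpsi y) (x - y).

(* Strategy profiles of an N-player game with strategy spaces R^(d i). *)
Definition profile N (d : 'I_N -> nat) := forall i : 'I_N, 'rV[R]_(d i).

Definition in_prod N (d : 'I_N -> nat) (X : forall i, set 'rV[R]_(d i))
  (p : profile d) : Prop := forall i, X i (p i).

Definition psub N (d : 'I_N -> nat) (p q : profile d) : profile d :=
  fun i => p i - q i.

Definition pnorm N (d : 'I_N -> nat) (p : profile d) : R :=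
  Num.sqrt (\sum_(i < N) sqnorm (p i)).

(* Unilateral deviation: replace block i of p by x. *)
Definition upd N (d : 'I_N -> nat) (p : profile d) (i : 'I_N) (x : 'rV[R]_(d i))
  : profile d :=
  fun j => match i =P j with
           | ReflectT e => ecast k ('rV[R]_(d k)) e x
           | ReflectF _ => p j
           end.

Definition is_pgrad_on N (d : 'I_N -> nat) (X : forall i, set 'rV[R]_(d i))
  (v : profile d -> R) (gv : forall j : 'I_N, profile d -> 'rV[R]_(d j)) : Prop :=
  forall p, in_prod X p -> forall e : R, 0 < e -> exists2 del : R, 0 < del &
    forall q, in_prod X q -> pnorm (psub q p) < del ->
      `| v q - v p - \sum_(j < N) dotv (gv j p) (q j - p j) | <= e * pnorm (psub q p).

Definition pbregman N (d : 'I_N -> nat)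
  (psi : forall i : 'I_N, 'rV[R]_(d i) -> R)
  (gpsi : forall i : 'I_N, 'rV[R]_(d i) -> 'rV[R]_(d i))
  (p q : profile d) : R := \sum_(i < N) bregman (psi i) (gpsi i) (p i) (q i).

End Defs.

(* Main.v *)
Require Import Defs.
From HB Require Import structures.
From mathcomp Require Import all_boot all_order all_algebra.
From mathcomp Require Import all_classical all_reals all_analysis.
From mathcomp Require Import ring lra.
Import Order.TTheory GRing.Theory Num.Theory.
Import numFieldNormedType.Exports.
Local Open Scope classical_set_scope.
Local Open Scope ring_scope.
Set Implicit Arguments. Unset Strict Implicit.
Section H.
Variable R : realType.
Implicit Types (n : nat).

Lemma dotvDl n (u w z : 'rV[R]_n) : dotv (u + w) z = dotv u z + dotv w z.
Proof. by rewrite /dotv -big_split; apply: eq_bigr => j _; rewrite !mxE mulrDl. Qed.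
Lemma dotvDr n (u w z : 'rV[R]_n) : dotv z (u + w) = dotv z u + dotv z w.
Proof. by rewrite /dotv -big_split; apply: eq_bigr => j _; rewrite !mxE mulrDr. Qed.
Lemma dotvNl n (u z : 'rV[R]_n) : dotv (- u) z = - dotv u z.
Proof. by rewrite /dotv -sumrN; apply: eq_bigr => j _; rewrite !mxE mulNr. Qed.
Lemma dotvNr n (u z : 'rV[R]_n) : dotv z (- u) = - dotv z u.
Proof. by rewrite /dotv -sumrN; apply: eq_bigr => j _; rewrite !mxE mulrN. Qed.
Lemma dotvBl n (u w z : 'rV[R]_n) : dotv (u - w) z = dotv u z - dotv w z.
Proof. by rewrite dotvDl dotvNl. Qed.
Lemma dotvBr n (u w z : 'rV[R]_n) : dotv z (u - w) = dotv z u - dotv z w.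
Proof. by rewrite dotvDr dotvNr. Qed.
Lemma dotvZl n a (u z : 'rV[R]_n) : dotv (a *: u) z = a * dotv u z.
Proof. by rewrite /dotv mulr_sumr; apply: eq_bigr => j _; rewrite !mxE mulrA. Qed.
Lemma dotvZr n a (u z : 'rV[R]_n) : dotv z (a *: u) = a * dotv z u.
Proof. by rewrite /dotv mulr_sumr; apply: eq_bigr => j _; rewrite !mxE mulrCA. Qed.
Lemma dotv0r n (z : 'rV[R]_n) : dotv z 0 = 0.
Proof. by rewrite /dotv big1 // => j _; rewrite mxE mulr0. Qed.
Lemma sqnorm_ge0 n (u : 'rV[R]_n) : 0 <= sqnorm u.
Proof. by rewrite /sqnorm /dotv sumr_ge0 // => j _; rewrite -expr2 sqr_ge0. Qed.
Lemma sqnormN n (u : 'rV[R]_n) : sqnorm (- u) = sqnorm u.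
Proof. by rewrite /sqnorm dotvNl dotvNr opprK. Qed.
Lemma sqnormB n (u w : 'rV[R]_n) : sqnorm (u - w) = sqnorm (w - u).
Proof. by rewrite -sqnormN opprB. Qed.
Lemma enormZ n t (u : 'rV[R]_n) : 0 <= t -> enorm (t *: u) = t * enorm u.
Proof.
move=> t0; rewrite /enorm /sqnorm dotvZl dotvZr mulrA -expr2 sqrtrM ?sqr_ge0 //.
by rewrite sqrtr_sqr ger0_norm.
Qed.
Lemma enorm_ge0 n (u : 'rV[R]_n) : 0 <= enorm u.
Proof. exact: sqrtr_ge0. Qed.
Lemma zt_sub n t (x y : 'rV[R]_n) : t *: y + (1 - t) *: x - x = t *: (y - x).
Proof.
by rewrite scalerBl scale1r scalerBr -addrA [(x - _) - x]addrAC subrr add0r.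
Qed.

Lemma dotv_amgm n (al be : R) (u w : 'rV[R]_n) : 0 < al -> 1 <= 4 * al * be ->
  dotv u w <= al * sqnorm u + be * sqnorm w.
Proof.
move=> a0 h; rewrite /sqnorm /dotv !mulr_sumr -big_split ler_sum // => j _.
set p := u ord0 j; set q := w ord0 j.
have : 0 <= (2 * al * p - q) ^+ 2 + (4 * al * be - 1) * q ^+ 2.
  by rewrite addr_ge0 ?sqr_ge0 // mulr_ge0 ?sqr_ge0 // subr_ge0.
move=> H.
have H2 : 0 <= 4 * al * (al * (p * p) + be * (q * q) - p * q).
  by have -> : 4 * al * (al * (p * p) + be * (q * q) - p * q) = (2 * al * p - q) ^+ 2 + (4 * al * be - 1) * q ^+ 2 by ring.
have : 0 <= al * (p * p) + be * (q * q) - p * q.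
  by move: H2; rewrite pmulr_rge0 // mulr_gt0.
by rewrite subr_ge0.
Qed.
End H.
Lemma L0 (R : realType) (phi : R -> R) (gh c K nh : R) : 0 <= nh ->
 (forall t, 0 < t < 1 -> phi t <= t * c + t ^+ 2 * K) ->
 (forall e, 0 < e -> exists2 del, 0 < del & forall t, 0 < t < 1 -> t * nh < del ->
     t * gh - e * (t * nh) <= phi t) ->
 gh <= c.
Proof.
move=> nh0 Hup Hlo.
have key : forall e, 0 < e -> gh <= c + e * (nh + `|K|).
  move=> e e0; have [del d0 Hd] := Hlo e e0.
  have n1 : 0 < nh + 1 by lra.
  pose t := Num.min (2^-1) (Num.min e (del / (nh + 1))).
  have t0 : 0 < t by rewrite !lt_min invr_gt0 e0 divr_gt0 //; lra.
  have tle : [/\ t <= 2^-1, t <= e & t <= del / (nh + 1)].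
    by move: (le_refl t); rewrite {1}/t !le_min => /and3P.
  case: tle => t1 te td.
  have t1' : t < 1 by apply: (le_lt_trans t1); rewrite invf_lt1 //; lra.
  move: td; rewrite ler_pdivlMr // => td.
  have tn : t * nh < del by nra.
  have tt : 0 < t < 1 by rewrite t0 t1'.
  have h1 := Hd t tt tn.
  have h2 := Hup t tt.
  have h4 : t * (gh - c - e * nh - t * K) <= 0.
    have -> : t * (gh - c - e * nh - t * K) = (t * gh - e * (t * nh)) - (t * c + t ^+ 2 * K) by ring.
    lra.
  have h5 : gh - c - e * nh - t * K <= 0 by move: h4; rewrite pmulr_rle0.
  have h6 : t * K <= e * `|K|.
    apply: (le_trans (y := t * `|K|)); first by apply: ler_wpM2l; [exact: ltW | exact: ler_norm].
    by rewrite ler_wpM2r.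
  lra.
apply/ler_addgt0Pr => e e0.
have C0 : 0 < nh + `|K| + 1 by have := normr_ge0 K; lra.
have := key (e / (nh + `|K| + 1)) (divr_gt0 e0 C0).
have : e / (nh + `|K| + 1) * (nh + `|K|) <= e.
  rewrite mulrAC ler_pdivrMr //; have := normr_ge0 K; nra.
lra.
Qed.
Section U.
Variable R : realType.
Variables (N : nat) (d : 'I_N -> nat).
Lemma upd_same (p : profile R d) i (x : 'rV[R]_(d i)) : upd p x i = x.
Proof.
rewrite /upd; case: (i =P i) => [e|]; last by [].
by rewrite (eq_irrelevance e erefl).
Qed.
Lemma upd_diff (p : profile R d) i j (x : 'rV[R]_(d i)) : i != j -> upd p x j = p j.
Proof. by move=> ij; rewrite /upd; case: (i =P j) => // e; exfalso; move: ij; by rewrite e eqxx. Qed.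
End U.

Lemma breg_sc (R : realType) n (A : set 'rV[R]_n) f g rho x y :
  convex_set_rv A -> is_grad_on A f g -> strongly_convex_on rho A f -> A x -> A y ->
  rho / 2 * sqnorm (x - y) <= bregman f g x y.
Proof.
move=> cA gA sA Ax Ay.
suff : dotv (g y) (x - y) <= f x - f y - rho / 2 * sqnorm (x - y).
  by rewrite /bregman; lra.
apply: (@L0 R (fun t => f (t *: x + (1 - t) *: y) - f y) _ _ (rho / 2 * sqnorm (x - y))
   (enorm (x - y)) (enorm_ge0 _)).
- move=> t /andP [t0 t1].
  have t01 : 0 <= t <= 1 by rewrite !ltW.
  have H := sA x y t Ax Ay t01.
  have -> : t * (f x - f y - rho / 2 * sqnorm (x - y)) + t ^+ 2 * (rho / 2 * sqnorm (x - y))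
     = t * f x + (1 - t) * f y - rho / 2 * t * (1 - t) * sqnorm (x - y) - f y by ring.
  lra.
- move=> e e0; have [del d0 Hd] := gA y Ay e e0.
  exists del => // t /andP [t0 t1] tn.
  have Az : A (t *: x + (1 - t) *: y) by apply: cA => //; rewrite !ltW.
  have := Hd _ Az; rewrite zt_sub (enormZ _ (ltW t0)) dotvZr => /(_ tn).
  rewrite ler_norml => /andP [h _]; lra.
Qed.

Section U2.
Variable R : realType.
Variables (N : nat) (d : 'I_N -> nat).
Lemma sum_upd (p : profile R d) i (z : 'rV[R]_(d i)) (gg : forall j, 'rV[R]_(d j)) :
  \sum_(j < N) dotv (gg j) (upd p z j - p j) = dotv (gg i) (z - p i).
Proof.
rewrite (bigD1 i) //= upd_same big1 ?addr0 // => j ji.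
by rewrite upd_diff 1?eq_sym // subrr dotv0r.
Qed.
Lemma pnorm_upd (p : profile R d) i (z : 'rV[R]_(d i)) :
  pnorm (psub (upd p z) p) = enorm (z - p i).
Proof.
rewrite /pnorm /enorm /psub (bigD1 i) //= upd_same big1 ?addr0 // => j ji.
by rewrite upd_diff 1?eq_sym // subrr /sqnorm dotv0r.
Qed.
Lemma in_prod_upd (X : forall i, set 'rV[R]_(d i)) (p : profile R d) i (z : 'rV[R]_(d i)) :
  in_prod X p -> X i z -> in_prod X (upd p z).
Proof.
move=> Hp Hz j; case: (eqVneq i j) => [e|ne]; last by rewrite upd_diff.
by subst j; rewrite upd_same.
Qed.
End U2.

Lemma foc (R : realType) N (d : 'I_N -> nat) (X : forall i, set 'rV[R]_(d i))
  (vi : profile R d -> R) (gvi : forall j, profile R d -> 'rV[R]_(d j)) i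
  (Gi : 'rV[R]_(d i) -> R) (gGi : 'rV[R]_(d i) -> 'rV[R]_(d i)) mu pimu x :
  convex_set_rv (X i) -> is_pgrad_on X vi gvi -> is_grad_on (X i) Gi gGi ->
  in_prod X pimu -> 0 < mu ->
  (forall y, X i y -> vi (upd pimu y) - mu * Gi y <= vi pimu - mu * Gi (pimu i)) ->
  X i x ->
  dotv (gvi i pimu) (x - pimu i) - mu * dotv (gGi (pimu i)) (x - pimu i) <= 0.
Proof.
move=> cX Hv HG Hp mu0 Heq Hx.
pose z t := t *: x + (1 - t) *: pimu i.
apply: (@L0 R (fun t => (vi (upd pimu (z t)) - mu * Gi (z t)) - (vi pimu - mu * Gi (pimu i)))
  _ 0 0 (enorm (x - pimu i)) (enorm_ge0 _)).
- move=> t /andP [t0 t1]; rewrite !mulr0 addr0 subr_le0; apply: Heq.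
  by apply: cX; [exact: Hx | exact: (Hp i) | rewrite !ltW].
- move=> e e0.
  have e2 : 0 < e / 2 by rewrite divr_gt0.
  have e3 : 0 < e / (2 * mu) by rewrite divr_gt0 // mulr_gt0.
  have [del1 d1 H1] := Hv pimu Hp _ e2.
  have [del2 d2 H2] := HG (pimu i) (Hp i) _ e3.
  exists (Num.min del1 del2); first by rewrite lt_min d1 d2.
  move=> t /andP [t0 t1]; rewrite lt_min => /andP [tn1 tn2].
  have Az : X i (z t) by apply: cX; [exact: Hx | exact: (Hp i) | rewrite !ltW].
  have Aq := in_prod_upd Hp Az.
  have := H1 _ Aq; rewrite pnorm_upd sum_upd /z zt_sub (enormZ _ (ltW t0)) dotvZr.
  move=> /(_ tn1); rewrite ler_norml => /andP [h1 _].
  have := H2 _ Az; rewrite /z zt_sub (enormZ _ (ltW t0)) dotvZr.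
  move=> /(_ tn2); rewrite ler_norml => /andP [_ h2].
  have hm : mu * (e / (2 * mu) * (t * enorm (x - pimu i))) = e / 2 * (t * enorm (x - pimu i)).
    by field; rewrite gt_eqF.
  have h3 := ler_wpM2l (ltW mu0) h2.
  rewrite hm in h3.
  have -> : e * (t * enorm (x - pimu i)) = e / 2 * (t * enorm (x - pimu i)) + e / 2 * (t * enorm (x - pimu i)) by field.
  have -> : t * (dotv (gvi i pimu) (x - pimu i) - mu * dotv (gGi (pimu i)) (x - pimu i)) =
     t * dotv (gvi i pimu) (x - pimu i) - mu * (t * dotv (gGi (pimu i)) (x - pimu i)) by ring.
  move: h3; rewrite mulrDr mulrBr; lra.
Qed.
Theorem lemma2 (R : realType) (N : nat) (d : 'I_N -> nat)
  (X : forall i : 'I_N, set 'rV[R]_(d i))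
  (v : 'I_N -> profile R d -> R)
  (gv : forall i j : 'I_N, profile R d -> 'rV[R]_(d j))
  (L rho beta gamma mu eta : R)
  (psi : forall i : 'I_N, 'rV[R]_(d i) -> R)
  (gpsi : forall i : 'I_N, 'rV[R]_(d i) -> 'rV[R]_(d i))
  (G : forall i : 'I_N, 'rV[R]_(d i) -> 'rV[R]_(d i) -> R)
  (gG : forall i : 'I_N, 'rV[R]_(d i) -> 'rV[R]_(d i) -> 'rV[R]_(d i))
  (sigma pimu : profile R d) (pi : nat -> profile R d) :
  (* the game *)
  (1 <= N)%N ->
  (forall i, X i !=set0) ->
  (forall i, compact (X i)) ->
  (forall i, convex_set_rv (X i)) ->
  (forall i, is_pgrad_on X (v i) (gv i)) ->
  (* monotone *)
  (forall p p', in_prod X p -> in_prod X p' ->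
     \sum_(i < N) dotv (gv i i p - gv i i p') (p i - p' i) <= 0) ->
  (* L-smooth *)
  (forall p p', in_prod X p -> in_prod X p' ->
     \sum_(i < N) sqnorm (gv i i p - gv i i p') <= L ^+ 2 * (pnorm (psub p p')) ^+ 2) ->
  (* regularizer *)
  0 < rho ->
  (forall i, is_grad_on (X i) (psi i) (gpsi i)) ->
  (forall i, strongly_convex_on rho (X i) (psi i)) ->
  (* perturbation *)
  (forall i s x, X i s -> X i x -> 0 <= G i x s) ->
  (forall i s, X i s -> is_grad_on (X i) (fun x => G i x s) (fun x => gG i x s)) ->
  (forall i s, X i s -> strictly_convex_on (X i) (fun x => G i x s)) ->
  (forall i s, X i s -> G i s s = 0) ->
  (* Assumption A *)
  0 < beta -> 0 < gamma ->
  (forall i s x x', X i s -> X i x -> X i x' ->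
     gamma * bregman (psi i) (gpsi i) x' x <=
       G i x' s - G i x s - dotv (gG i x s) (x' - x)
     /\ G i x' s - G i x s - dotv (gG i x s) (x' - x) <=
       beta * bregman (psi i) (gpsi i) x' x) ->
  (* perturbed equilibrium *)
  0 < mu ->
  in_prod X sigma ->
  in_prod X pimu ->
  (forall i x, X i x ->
     v i (upd pimu x) - mu * G i x (sigma i) <= v i pimu - mu * G i (pimu i) (sigma i)) ->
  (* step size *)
  0 < eta ->
  eta <= 2 * mu * gamma * rho ^+ 2 /
           (mu ^+ 2 * gamma * rho ^+ 2 * (gamma + 2 * beta) + 8 * L ^+ 2) ->
  (* the sequence *)
  (forall t, in_prod X (pi t)) ->
  (forall t : nat,
     pbregman psi gpsi pimu (pi t.+1) - pbregman psi gpsi pimu (pi t)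
       + pbregman psi gpsi (pi t.+1) (pi t)
     <= eta * \sum_(i < N)
          dotv (gv i i (pi t) - mu *: gG i (pi t i) (sigma i)) (pi t.+1 i - pimu i)) ->
  forall t : nat,
    pbregman psi gpsi pimu (pi t)
      <= pbregman psi gpsi pimu (pi 0%N) * (1 - eta * mu * gamma / 2) ^+ t.
Proof.
move=> N1 Xne Xc Xcv Hv Hmon Hsm rho0 Hgpsi Hsc G0 HgG Gsc Gss beta0 gamma0 HA mu0
  Hsig Hpim Heq eta0 Heta Hpi Hstep.
set D := mu ^+ 2 * gamma * rho ^+ 2 * (gamma + 2 * beta) + 8 * L ^+ 2 in Heta.
set K0 := mu * gamma * rho ^+ 2.
have K00 : 0 < K0 by rewrite /K0 !mulr_gt0 // exprn_gt0.
have D0 : 0 < D.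
  have h1 : 0 < mu ^+ 2 * gamma * rho ^+ 2 * (gamma + 2 * beta).
    by rewrite !mulr_gt0 ?exprn_gt0 //; lra.
  have h2 : 0 <= 8 * L ^+ 2 by rewrite mulr_ge0 ?sqr_ge0.
  rewrite /D; lra.
have etaD : eta * D <= 2 * K0.
  by move: Heta; rewrite ler_pdivlMr // /K0 !mulrA.
set M := 4 * L ^+ 2 + mu ^+ 2 * gamma ^+ 2 * rho ^+ 2.
have M0 : 0 < M.
  have h1 : 0 < mu ^+ 2 * gamma ^+ 2 * rho ^+ 2 by rewrite !mulr_gt0 ?exprn_gt0.
  have h2 : 0 <= 4 * L ^+ 2 by rewrite mulr_ge0 ?sqr_ge0.
  rewrite /M; lra.
set al := mu * gamma * rho / M.
set be := M / (4 * mu * gamma * rho).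
have al0 : 0 < al by rewrite /al divr_gt0 // !mulr_gt0.
have albe : 1 <= 4 * al * be.
  rewrite le_eqVlt; apply/orP; left; apply/eqP; rewrite /al /be; field.
  by apply/andP; split; rewrite ?gt_eqF // !mulr_gt0.
have DM : M + 2 * (mu ^+ 2 * gamma * beta * rho ^+ 2) <= D.
  have h2 : 0 <= 4 * L ^+ 2 by rewrite mulr_ge0 ?sqr_ge0.
  rewrite /M /D; lra.
have c0 : eta * mu * gamma <= 2.
  have h : (eta * mu * gamma) * K0 <= 2 * K0.
    apply: le_trans etaD; have -> : eta * mu * gamma * K0 = eta * (mu ^+ 2 * gamma ^+ 2 * rho ^+ 2) by rewrite /K0; ring.
    apply: ler_wpM2l; first exact: ltW.
    have h2 : 0 <= 4 * L ^+ 2 by rewrite mulr_ge0 ?sqr_ge0.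
    have h3 : 0 <= 2 * (mu ^+ 2 * gamma * beta * rho ^+ 2) by rewrite !mulr_ge0 ?sqr_ge0 // ltW.
    move: DM; rewrite /M; lra.
  by move: h; rewrite ler_pM2r.
have fac : 2 * eta * be / rho <= 1 - eta * mu * beta.
  have -> : 2 * eta * be / rho = eta * M / (2 * K0).
    rewrite /be /K0; field; by apply/and3P; split; rewrite gt_eqF // !mulr_gt0.
  rewrite ler_pdivrMr ?mulr_gt0 //.
  have : eta * (M + 2 * (mu ^+ 2 * gamma * beta * rho ^+ 2)) <= eta * D by rewrite ler_wpM2l // ltW.
  rewrite /K0 in etaD *; lra.
have step : forall t, pbregman psi gpsi pimu (pi t.+1) <=
    (1 - eta * mu * gamma / 2) * pbregman psi gpsi pimu (pi t).
  move=> t; have := Hstep t.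
  set a := pi t; set b := pi t.+1; set p := pimu.
  have Ha := Hpi t; have Hb := Hpi t.+1.
  have Hblk : forall i : 'I_N, dotv (gv i i a - mu *: gG i (a i) (sigma i)) (b i - p i) <=
    dotv (gv i i a - gv i i p) (a i - p i) + al * sqnorm (gv i i a - gv i i p)
    + be * sqnorm (b i - a i)
    + (- (mu * gamma)) * bregman (psi i) (gpsi i) (b i) (p i)
    + (- (mu * gamma)) * bregman (psi i) (gpsi i) (p i) (a i)
    + (mu * beta) * bregman (psi i) (gpsi i) (b i) (a i).
    move=> i.
    have F1 := foc (Xcv i) (Hv i) (HgG i (sigma i) (Hsig i)) Hpim mu0 (Heq i) (Hb i).
    have [A1 _] := HA i (sigma i) (p i) (b i) (Hsig i) (Hpim i) (Hb i).
    have [A2 _] := HA i (sigma i) (a i) (p i) (Hsig i) (Ha i) (Hpim i).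
    have [_ A3] := HA i (sigma i) (a i) (b i) (Hsig i) (Ha i) (Hb i).
    have AM := dotv_amgm (gv i i a - gv i i p) (b i - a i) al0 albe.
    rewrite !(dotvBl, dotvBr, dotvZl) in F1 A1 A2 A3 AM *.
    have A1' := ler_wpM2l (ltW mu0) A1.
    have A2' := ler_wpM2l (ltW mu0) A2.
    have A3' := ler_wpM2l (ltW mu0) A3.
    lra.
  have Hsum := @ler_sum _ _ (index_enum 'I_N) xpredT _ _ (fun i _ => Hblk i).
  rewrite !big_split /= -!mulr_sumr in Hsum.
  have Mo := Hmon a p Ha Hpim.
  have Sm := Hsm a p Ha Hpim.
  have Pe : pnorm (psub a p) ^+ 2 = \sum_(i < N) sqnorm (a i - p i).
    by rewrite /pnorm sqr_sqrtr // sumr_ge0 // => i _; exact: sqnorm_ge0.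
  rewrite Pe in Sm.
  have SX : rho / 2 * \sum_(i < N) sqnorm (a i - p i) <= pbregman psi gpsi p a.
    rewrite /pbregman mulr_sumr; apply: ler_sum => i _.
    by rewrite sqnormB; exact: (breg_sc (Xcv i) (Hgpsi i) (Hsc i) (Hpim i) (Ha i)).
  have SZ : rho / 2 * \sum_(i < N) sqnorm (b i - a i) <= pbregman psi gpsi b a.
    rewrite /pbregman mulr_sumr; apply: ler_sum => i _.
    exact: (breg_sc (Xcv i) (Hgpsi i) (Hsc i) (Hb i) (Ha i)).
  have SW : 0 <= pbregman psi gpsi b p.
    rewrite /pbregman; apply: sumr_ge0 => i _.
    apply: le_trans (breg_sc (Xcv i) (Hgpsi i) (Hsc i) (Hb i) (Hpim i)).
    by rewrite mulr_ge0 ?sqnorm_ge0 // divr_ge0 // ltW.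
  rewrite /pbregman in SX SZ SW *.
  set SG := \sum_(i < N) sqnorm (gv i i a - gv i i p) in Hsum Sm.
  set Pa := \sum_(i < N) sqnorm (a i - p i) in Sm SX.
  set Q := \sum_(i < N) sqnorm (b i - a i) in Hsum SZ.
  have Pa0 : 0 <= Pa by apply: sumr_ge0 => i _; exact: sqnorm_ge0.
  have Q0 : 0 <= Q by apply: sumr_ge0 => i _; exact: sqnorm_ge0.
  have i1 : al * SG <= al * (L ^+ 2 * Pa) := ler_wpM2l (ltW al0) Sm.
  have alM : al * M = mu * gamma * rho by rewrite /al; field; rewrite gt_eqF.
  have i2 : al * L ^+ 2 * 4 <= mu * gamma * rho.
    rewrite -alM; have h : 4 * L ^+ 2 <= M.
      by rewrite /M lerDl; apply/ltW; rewrite !mulr_gt0 ?exprn_gt0.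
    have := ler_wpM2l (ltW al0) h; lra.
  have i3 : al * L ^+ 2 * Pa <= mu * gamma * rho / 4 * Pa.
    by apply: ler_wpM2r => //; lra.
  have i4 : mu * gamma / 2 * (rho / 2 * Pa) <= mu * gamma / 2 * (\sum_(i < N) bregman (psi i) (gpsi i) (p i) (a i)).
    by apply: ler_wpM2l => //; rewrite divr_ge0 // mulr_ge0 // ltW.
  have ii1 : eta * be * Q = (2 * eta * be / rho) * (rho / 2 * Q) by field; rewrite gt_eqF.
  have fac0 : 0 <= 2 * eta * be / rho.
    apply: divr_ge0; last exact: ltW.
    have : 0 < be by rewrite /be divr_gt0 // !mulr_gt0.
    move=> b0; apply/ltW; apply: mulr_gt0 => //; apply: mulr_gt0 => //.
  set Z := \sum_(i < N) bregman (psi i) (gpsi i) (b i) (a i) in SZ Hsum *.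
  have Z0 : 0 <= Z by apply: le_trans SZ; rewrite mulr_ge0 // divr_ge0 // ltW.
  have ii2 : 2 * eta * be / rho * (rho / 2 * Q) <= 2 * eta * be / rho * Z := ler_wpM2l fac0 SZ.
  have ii3 : 2 * eta * be / rho * Z <= (1 - eta * mu * beta) * Z := ler_wpM2r Z0 fac.
  have H1 := ler_wpM2l (ltW eta0) Hsum.
  have h5 : eta * (\sum_(i < N) dotv (gv i i a - gv i i p) (a i - p i)) <= 0.
    by rewrite mulr_ge0_le0 // ltW.
  have h6 : 0 <= eta * (mu * gamma) * (\sum_(i < N) bregman (psi i) (gpsi i) (b i) (p i)).
    by rewrite !mulr_ge0 // ltW.
  have h7 : eta * (al * SG) <= eta * (mu * gamma / 2 * (\sum_(i < N) bregman (psi i) (gpsi i) (p i) (a i))).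
    apply: ler_wpM2l; first exact: ltW.
    have : mu * gamma * rho / 4 * Pa = mu * gamma / 2 * (rho / 2 * Pa) by field.
    lra.
  move=> Hs; lra.
have cc : 0 <= 1 - eta * mu * gamma / 2 by lra.
elim=> [|t IH]; first by rewrite expr0 mulr1.
apply: le_trans (step t) _.
rewrite exprS [X in _ <= X]mulrCA; exact: (ler_wpM2l cc IH).
Qed.
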